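(* For every positive integer $n$, \[ {}_{H}w_{n}(x)=\sum_{l=0}^{n}\sum_{k=1}^{n}\sum_{j=0}^{k}\frac{(-1)^{k+1}}{k}\binom{n}{l}\genfrac{\{}{\}}{0pt}{}{n-l}{k}\genfrac{[}{]}{0pt}{}{k+1}{j+1}\,w_{l+j}(x)\left(\frac{x}{1+x}\right)^{k}. \]
   Context: $\genfrac{\{}{\}}{0pt}{}{n}{k}$ denotes the Stirling numbers of the second kind and $\genfrac{[}{]}{0pt}{}{n}{k}$ the unsigned Stirling numbers of the first kind. The geometric polynomials are $w_n(x)=\sum_{k=0}^{n}\genfrac{\{}{\}}{0pt}{}{n}{k}k!\,x^k$ (so $w_0(x)=1$). With $H_k=\sum_{i=1}^k 1/i$ the harmonic numbers, the harmonic geometric polynomials are ${}_{H}w_n(x)=\sum_{k=1}^{n}\genfrac{\{}{\}}{0pt}{}{n}{k}k!\,H_k\,x^k$ (so ${}_Hw_0(x)=0$). *)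

(* Defs.v *)
From mathcomp Require Import all_boot all_order all_algebra.
Set Implicit Arguments. Unset Strict Implicit. Unset Printing Implicit Defensive.
Import Order.TTheory GRing.Theory Num.Theory.
Local Open Scope ring_scope.

Fixpoint stirling2 (n k : nat) : nat :=
  match n, k with
  | 0, 0 => 1
  | 0, _.+1 => 0
  | _.+1, 0 => 0
  | n'.+1, k'.+1 => (k'.+1 * stirling2 n' k + stirling2 n' k')%N
  end.

Fixpoint stirling1 (n k : nat) : nat :=
  match n, k with
  | 0, 0 => 1
  | 0, _.+1 => 0
  | _.+1, 0 => 0
  | n'.+1, k'.+1 => (n' * stirling1 n' k + stirling1 n' k')%N
  end.

Definition harmonic (R : numFieldType) (k : nat) : R :=
  \sum_(1 <= i < k.+1) (i%:R)^-1.

Definition geom_poly (R : numFieldType) (n : nat) (x : R) : R :=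
  \sum_(0 <= k < n.+1) (stirling2 n k)%:R * (k`!)%:R * x ^+ k.

Definition hgeom_poly (R : numFieldType) (n : nat) (x : R) : R :=
  \sum_(1 <= k < n.+1) (stirling2 n k)%:R * (k`!)%:R * harmonic R k * x ^+ k.

(* Main.v *)
Require Import Defs.
From mathcomp Require Import all_boot all_order all_algebra.
From mathcomp Require Import ring zify.
Import Order.TTheory GRing.Theory Num.Theory.
Local Open Scope ring_scope.

Lemma binid m a q : ('C(m.+1, a.+1) * (q + m).+1 = 'C(m, a) * (q + a).+1 + 'C(m, a.+1) * (q + a + m).+2)%N.
Proof.
have h := mul_bin_left m a.
rewrite binS.
case: (leqP a m) => am.
  nia.
rewrite !bin_small //; lia.
Qed.

Lemma S2rec n m : stirling2 n.+1 m =
  (m * stirling2 n m + (if m is m'.+1 then stirling2 n m' else 0))%N.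
Proof. by case: m => [|m] //=; rewrite muln0. Qed.

Lemma S2_small n m : (n < m)%N -> stirling2 n m = 0%N.
Proof.
elim: n m => [|n IH] [|m] //= lt; rewrite !IH ?muln0 //; exact: ltnW.
Qed.

Lemma S1S n m : stirling1 n.+1 m.+1 = (n * stirling1 n m.+1 + stirling1 n m)%N.
Proof. by []. Qed.
Lemma S1n0 n : stirling1 n.+1 0 = 0%N.
Proof. by []. Qed.

Lemma EEnat n m l :
 ((if l is l'.+1 then 'C(n,l') * stirling2 (n - l') m else 0) + m * ('C(n,l) * stirling2 (n-l) m)
  + (if m is m'.+1 then 'C(n,l) * stirling2 (n - l) m' else 0) = 'C(n.+1,l) * stirling2 (n.+1 - l) m)%N.
Proof.
case: l => [|l].
  rewrite !subn0 !bin0 S2rec add0n !mul1n; by case: m => [|m] //=; rewrite mul1n.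
rewrite subSS binS.
case: (ltnP l n) => ln.
  have -> : (n - l = (n - l.+1).+1)%N by lia.
  rewrite S2rec; case: m => [|m]; lia.
rewrite (bin_small (n:=n) (m:=l.+1)); last lia.
case: m => [|m]; lia.
Qed.

Lemma FFnat n q m :
  (stirling2 n.+1 (q + m) * 'C(q + m, m) =
   (if q is q'.+1 then stirling2 n (q' + m) * 'C(q' + m, m) else 0)
   + stirling2 n (q + m) * 'C(q + m, m) * (q + m)
   + (if m is m'.+1 then stirling2 n (q + m') * 'C(q + m', m') else 0))%N.
Proof.
rewrite S2rec.
case: q => [|q]; case: m => [|m]; rewrite ?addn0 ?add0n ?addSn ?addnS ?binn ?bin0 ?binS /=; lia.
Qed.

Lemma S1_small n m : (n < m)%N -> stirling1 n m = 0%N.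
Proof.
elim: n m => [|n IH] [|m] //= lt; rewrite !IH ?muln0 //; exact: ltnW.
Qed.

Section Main.
Variable R : numFieldType.
Implicit Types p : {poly R}.

Definition Pm (m : nat) : {poly R} := \prod_(i < m) ('X + (i.+1)%:R%:P).
Definition ff (q : nat) : {poly R} := \prod_(i < q) ('X - (i%:R)%:P).

Lemma coef_Pm m j : (Pm m)`_j = (stirling1 m.+1 j.+1)%:R.
Proof.
elim: m j => [|m IH] j.
  by rewrite /Pm big_ord0 coef1; case: j.
have -> : Pm m.+1 = Pm m * ('X + (m.+1)%:R%:P) by rewrite /Pm big_ord_recr.
rewrite mulrDr coefD coefMX coefMC.
case: j => [|j].
  by rewrite eqxx add0r IH (S1S m.+1 0) S1n0 addn0 natrM mulrC.
rewrite -[(j.+1 == 0)%N]/false -[j.+1.-1]/j.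
by rewrite !IH (S1S m.+1 j.+1) natrD natrM mulrC addrC.
Qed.

Lemma size_Pm m : (size (Pm m) <= m.+1)%N.
Proof.
elim: m => [|m IH]; first by rewrite /Pm big_ord0 size_poly1.
rewrite /Pm big_ord_recr /= -/(Pm m).
apply: leq_trans (size_polyMleq _ _) _.
rewrite size_XaddC addnS /= addn1. 
by case: (size (Pm m)) IH.
Qed.


Lemma ffS q : ff q.+1 = ff q * ('X - q%:R%:P).
Proof. by rewrite /ff big_ord_recr. Qed.

Lemma sum_shiftX (g : nat -> R) p N :
  \sum_(r < N.+1) (p * 'X)`_r * g r = \sum_(r < N) p`_r * g r.+1.
Proof.
rewrite big_ord_recl coefMX eqxx mul0r add0r.
by apply: eq_bigr => i _; rewrite coefMX.
Qed.

Lemma ff_S2 q N i : (q <= N)%N ->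
  \sum_(r < N.+1) (ff q)`_r * (stirling2 r i)%:R = (i == q)%:R.
Proof.
elim: q N i => [|q IH] N i qN.
  rewrite /ff big_ord0 big_ord_recl coef1 eqxx mul1r big1 ?addr0.
    by case: i.
  by move=> j _; rewrite coef1 mul0r.
case: N qN => [//|N] qN.
rewrite ffS mulrBr.
under eq_bigr do rewrite coefB coefMC mulrBl.
rewrite sumrB (sum_shiftX (fun r => (stirling2 r i)%:R)).
under [X in _ - X = _]eq_bigr do rewrite -mulrA (mulrC q%:R) mulrA.
rewrite -mulr_suml (IH N.+1) ?(ltnW qN) //.
under eq_bigr do rewrite S2rec natrD natrM mulrDr mulrA (mulrC _ i%:R) -mulrA.
rewrite big_split /= -mulr_sumr.
case: i => [|i].
  rewrite mul0r add0r big1; last by move=> j _; rewrite mulr0.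
  by case: q {IH qN} => [|q]; rewrite /= ?mul0r ?mulr0 ?subr0.
rewrite (IH N i qN) (IH N i.+1 qN).
case: (eqVneq i.+1 q) => [<-|ne].
  by rewrite mulr1 mul1r addrAC subrr add0r eqSS.
by rewrite /= !mulr0n mulr0 mul0r add0r subr0 eqSS.
Qed.


Lemma sum_delta N q (F : nat -> R) : (q < N)%N ->
  \sum_(k < N) ((k : nat) == q)%:R * F k = F q.
Proof.
move=> qN; rewrite (bigD1 (Ordinal qN)) //= eqxx mul1r big1 ?addr0 // => k.
rewrite -val_eqE /= => /negbTE ->; by rewrite mul0r.
Qed.

Variable x : R.

Definition Lam N p := \sum_(r < N) p`_r * geom_poly r x.

Lemma LamD N : {morph Lam N : p1 p2 / p1 + p2}.
Proof. by move=> p1 p2; rewrite /Lam -big_split; apply: eq_bigr => i _; rewrite coefD mulrDl. Qed.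

Lemma Lam0 N : Lam N 0 = 0.
Proof. by rewrite /Lam big1 // => i _; rewrite coef0 mul0r. Qed.

Lemma LamZ N c p : Lam N (c *: p) = c * Lam N p.
Proof. by rewrite /Lam mulr_sumr; apply: eq_bigr => i _; rewrite coefZ mulrA. Qed.

Lemma Lam_sum N I (r : seq I) (P : pred I) (F : I -> {poly R}) :
  Lam N (\sum_(i <- r | P i) F i) = \sum_(i <- r | P i) Lam N (F i).
Proof. exact: (big_morph _ (LamD N) (Lam0 N)). Qed.

Lemma Lam_Xn N r : (r < N)%N -> Lam N 'X^r = geom_poly r x.
Proof.
move=> rN; rewrite /Lam.
under eq_bigr do rewrite coefXn.
exact: (@sum_delta N r (fun k => geom_poly k x)).
Qed.

Lemma geomE r N : (r < N)%N ->
  geom_poly r x = \sum_(k < N) (stirling2 r k)%:R * (k`!)%:R * x ^+ k.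
Proof.
move=> rN; rewrite /geom_poly -(big_mkord xpredT (fun k => (stirling2 r k)%:R * (k`!)%:R * x ^+ k)) (@big_cat_nat _ _ _ r.+1 0 N _ _ (leq0n _) rN) /=.
rewrite [X in _ + X]big_nat_cond [X in _ + X]big1 ?addr0 // => k /andP [/andP [rk _] _].
by rewrite S2_small // mul0r mul0r.
Qed.

Lemma Lam_ff N q : (q < N)%N -> Lam N (ff q) = (q`!)%:R * x ^+ q.
Proof.
move=> qN; rewrite /Lam.
transitivity (\sum_(r < N) \sum_(k < N) (ff q)`_r * ((stirling2 r k)%:R * (k`!)%:R * x ^+ k)).
  by apply: eq_bigr => r _; rewrite (geomE _ _ (ltn_ord r)) mulr_sumr.
rewrite exchange_big /=.
transitivity (\sum_(k < N) ((k : nat) == q)%:R * ((k`!)%:R * x ^+ k)).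
  apply: eq_bigr => k _.
  case: N qN k => [//|N] qN k.
  rewrite -(ff_S2 q N k qN) mulr_suml; apply: eq_bigr => r _.
  by rewrite !mulrA.
exact: (@sum_delta N q (fun k => (k`!)%:R * x ^+ k)).
Qed.


Lemma fact_neq0 n : (n`!)%:R != 0 :> R.
Proof. by rewrite pnatr_eq0 -lt0n fact_gt0. Qed.

Definition cc m q a : R := ('C(m, a))%:R * ((q + m)`!)%:R / ((q + a)`!)%:R.

Lemma cc_small m q : cc m q m.+1 = 0.
Proof. by rewrite /cc bin_small // !mul0r. Qed.

Lemma cc0 m q : cc m.+1 q 0 = cc m q 0 * (q + 0 + m).+1%:R.
Proof.
rewrite /cc !bin0 !mul1r addnS factS natrM addn0.
have := fact_neq0 q; have := fact_neq0 (q + m).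
move=> h1 h2; field => //.
Qed.

Lemma ccS m q a : cc m.+1 q a.+1 = cc m q a + cc m q a.+1 * (q + a.+1 + m).+1%:R.
Proof.
rewrite /cc !addnS !factS.
have h : ('C(m.+1,a.+1)%:R * (q+m).+1%:R : R) = 'C(m, a)%:R * (q + a).+1%:R + 'C(m, a.+1)%:R * (q + a + m).+2%:R.
  by rewrite -!natrM -natrD binid.
have h1 := fact_neq0 (q + a); have h2 := fact_neq0 (q + m).
have h3 : (q + a).+1%:R != 0 :> R by rewrite pnatr_eq0.
rewrite !natrM.
transitivity (('C(m.+1,a.+1)%:R * (q+m).+1%:R) * (q+m)`!%:R / ((q+a).+1%:R * (q+a)`!%:R) : R).
  by field; rewrite h1 /= addrC -natrD natr1 pnatr_eq0.
rewrite h addSn. field. by rewrite h1 /= addrC -natrD natr1 pnatr_eq0.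
Qed.


Lemma ffX q m : ff q * ('X + (m.+1)%:R%:P) = ff q.+1 + ((q + m).+1)%:R *: ff q.
Proof.
rewrite ffS -mul_polyC (mulrC _%:P) -mulrDr; congr (_ * _).
rewrite -addrA -polyCN -polyCD; congr (_ + _%:P).
by rewrite -addnS natrD addKr.
Qed.

Lemma PffE m q : Pm m * ff q = \sum_(a < m.+1) cc m q a *: ff (q + a).
Proof.
elim: m => [|m IH].
  rewrite /Pm big_ord0 mul1r big_ord1 /cc bin0 addn0 mul1r divff ?scale1r //.
  exact: fact_neq0.
have -> : Pm m.+1 * ff q = (Pm m * ff q) * ('X + m.+1%:R%:P).
  by rewrite /Pm big_ord_recr /= mulrAC.
rewrite IH mulr_suml.
under eq_bigr do rewrite -scalerAl ffX scalerDr scalerA.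
rewrite big_split /= [RHS]big_ord_recl /=.
under [in RHS]eq_bigr do rewrite ccS scalerDl.
rewrite big_split /= addrCA; congr (_ + _).
  by apply: eq_bigr => i _; rewrite addnS.
rewrite big_ord_recl [X in _ = _ + X]big_ord_recr /= cc_small mul0r scale0r addr0.
congr (_ + _); first by rewrite cc0.
Qed.


Lemma Lam_Pff N m q : (q + m < N)%N ->
  Lam N (Pm m * ff q) = (q + m)`!%:R * x ^+ q * (1 + x) ^+ m.
Proof.
move=> qmN; rewrite PffE Lam_sum addrC exprD1n mulr_sumr.
apply: eq_bigr => a _.
have aN : (q + a < N)%N.
  by apply: leq_ltn_trans qmN; rewrite leq_add2l -ltnS.
rewrite LamZ Lam_ff // /cc exprD -mulr_natr.
have h1 := fact_neq0 (q + a).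
by field.
Qed.


Lemma ffX' q m : ff q * ('X + m%:R%:P) = ff q.+1 + (q + m)%:R *: ff q.
Proof.
rewrite ffS -mul_polyC (mulrC _%:P) -mulrDr; congr (_ * _).
rewrite -addrA -polyCN -polyCD; congr (_ + _%:P).
by rewrite natrD addKr.
Qed.

Fixpoint EE n m : {poly R} :=
  match n with
  | 0 => (stirling2 0 m)%:R%:P
  | n'.+1 => ('X + m%:R%:P) * EE n' m + (if m is m'.+1 then EE n' m' else 0)
  end.

Lemma coef_EE n m l : (EE n m)`_l = ('C(n, l) * stirling2 (n - l) m)%:R.
Proof.
elim: n m l => [|n IH] m l.
  rewrite /= coefC; case: l => [|l] //=; by rewrite mul1n.
rewrite /= -EEnat mulrDl !coefD coefXM coefCM.
case: m => [|m]; case: l => [|l]; rewrite ?coef0 ?addr0 ?IH /= ?natrD ?natrM ?mul0r ?add0r ?addr0 //.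
all: ring.
Qed.


Definition FF n m : {poly R} :=
  \sum_(q < n.+1) (stirling2 n (q + m) * 'C(q + m, m))%:R *: ff q.

Lemma FF_rec n m :
  FF n.+1 m = ('X + m%:R%:P) * FF n m + (if m is m'.+1 then FF n m' else 0).
Proof.
pose c q : R := (stirling2 n (q + m) * 'C(q + m, m))%:R.
pose e q : R := if m is m'.+1 then (stirling2 n (q + m') * 'C(q + m', m'))%:R else 0.
transitivity (\sum_(q < n.+2) ((if (q : nat) is q'.+1 then c q' else 0) *: ff q
   + (c q * (q + m)%:R) *: ff q + e q *: ff q)).
  apply: eq_bigr => -[q hq] _ /=.
  rewrite -!scalerDl; congr (_ *: _).
  rewrite FFnat !natrD !natrM /c /e; clear c e.
  by case: q {hq} => [|q]; case: m => [|m]; rewrite ?natrM ?natrD; ring.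
rewrite !big_split /= mulr_sumr.
have -> : (if m is m'.+1 then FF n m' else 0) = \sum_(q < n.+2) e q *: ff q.
  rewrite big_ord_recr /= /e; clear e c; case: m => [|m].
    by rewrite scale0r addr0 big1 // => i _; rewrite scale0r.
  rewrite S2_small ?mul0n ?scale0r ?addr0 //; last by rewrite addSn ltnS leq_addr.
congr (_ + _).
rewrite big_ord_recl /= scale0r add0r [X in _ + X]big_ord_recr /= /c.
rewrite S2_small ?mul0n ?mul0r ?scale0r ?addr0; last by rewrite addSn ltnS leq_addr.
rewrite -big_split /=; apply: eq_bigr => i _.
by rewrite -scalerAr (mulrC (_ + _)) ffX' scalerDr scalerA add0n -[bump 0 i]/(i.+1).
Qed.

Lemma EE_FF n m : EE n m = FF n m.
Proof.
elim: n m => [|n IH] m.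
  rewrite /FF big_ord1 /= add0n binn muln1 /ff big_ord0.
  by rewrite alg_polyC.
rewrite FF_rec /= IH; case: m => [|m] //; by rewrite IH.
Qed.


Lemma poly_expand p N : (forall i, (N <= i)%N -> p`_i = 0) ->
  p = \sum_(i < N) p`_i *: 'X^i.
Proof.
move=> hp; apply/polyP => i; rewrite coef_sum.
under eq_bigr do rewrite coefZ coefXn mulrC eq_sym.
case: (ltnP i N) => iN; first by rewrite sum_delta.
rewrite hp // big1 // => k _.
suff /negbTE -> : ((k : nat) != i) by rewrite mul0r.
by apply/eqP => ik; move: (ltn_ord k); rewrite ik ltnNge iN.
Qed.

Lemma perm_id n m : (m <= n)%N ->
  \sum_(l < n.+1) \sum_(j < m.+1) ('C(n, l))%:R * (stirling2 (n - l) m)%:R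
     * (stirling1 m.+1 j.+1)%:R * geom_poly (l + j) x
  = \sum_(q < n.+1) (stirling2 n (q + m) * 'C(q + m, m))%:R
     * ((q + m)`!%:R * x ^+ q * (1 + x) ^+ m).
Proof.
move=> mn; set N := (n + n).+1.
transitivity (Lam N (EE n m * Pm m)).
  rewrite {1}(@poly_expand (EE n m) n.+1); last first.
    by move=> i hi; rewrite coef_EE bin_small // mul0n.
  rewrite mulr_suml Lam_sum; apply: eq_bigr => l _.
  rewrite -scalerAl LamZ {1}(@poly_expand (Pm m) m.+1); last first.
    by move=> i hi; rewrite coef_Pm S1_small.
  rewrite [X in Lam N X]mulr_sumr Lam_sum mulr_sumr; apply: eq_bigr => j _.
  rewrite -scalerAr LamZ -exprD Lam_Xn; last first.
    have := ltn_ord l; have := ltn_ord j; rewrite /N; lia.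
  by rewrite coef_EE coef_Pm natrM !mulrA.
rewrite EE_FF /FF mulr_suml Lam_sum; apply: eq_bigr => q _.
rewrite -scalerAl LamZ (mulrC (ff q)) Lam_Pff //.
have := ltn_ord q; rewrite /N; lia.
Qed.


Lemma alt_bin k : \sum_(m < k.+1) (-1) ^+ m * ('C(k.+1, m.+1))%:R = 1 :> R.
Proof.
have := exprD1n (-1 : R) k.+1.
rewrite addNr expr0n /= big_ord_recl /= expr0 bin0 mulr1n.
move/eqP; rewrite eq_sym addr_eq0 => /eqP h.
rewrite [RHS]h -sumrN; apply: eq_bigr => i _.
by rewrite /bump /= add1n exprS mulN1r mulr_natr mulNrn opprK.
Qed.

Lemma harmS k : harmonic R k.+1 = harmonic R k + (k.+1)%:R^-1.
Proof. by rewrite /harmonic big_nat_recr. Qed.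

Lemma harm_alt k : harmonic R k =
  \sum_(m < k) (-1) ^+ m / (m.+1)%:R * ('C(k, m.+1))%:R.
Proof.
elim: k => [|k IH]; first by rewrite /harmonic big_geq // big_ord0.
rewrite harmS IH.
under [RHS]eq_bigr do rewrite binS natrD mulrDr.
rewrite big_split /= big_ord_recr /= bin_small // mulr0 addr0; congr (_ + _).
transitivity ((k.+1)%:R^-1 * \sum_(m < k.+1) (-1) ^+ m * ('C(k.+1, m.+1))%:R : R); first by rewrite alt_bin mulr1.
rewrite mulr_sumr; apply: eq_bigr => i _.
have h : (i.+1 * 'C(k.+1, i.+1))%:R = (k.+1 * 'C(k, i))%:R :> R by rewrite -mul_bin_diag.
rewrite !natrM in h.
have h1 : (i.+1)%:R != 0 :> R by rewrite pnatr_eq0.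
have h2 : (k.+1)%:R != 0 :> R by rewrite pnatr_eq0.
rewrite -[('C(k, i))%:R](mulKf h2) -h.
field. by rewrite !(addrC 1) !natr1 !pnatr_eq0.
Qed.


Lemma reindex n M : (0 < M)%N ->
  \sum_(1 <= k < n.+1) ('C(k, M))%:R * (stirling2 n k)%:R * (k`!)%:R * x ^+ k
  = \sum_(q < n.+1) (stirling2 n (q + M) * 'C(q + M, M))%:R
      * ((q + M)`!%:R * x ^+ (q + M)).
Proof.
move=> M0.
set g := fun k => ('C(k, M))%:R * (stirling2 n k)%:R * (k`!)%:R * x ^+ k.
have e1 : \sum_(1 <= k < n.+1) g k = \sum_(0 <= k < M + n.+1) g k.
  rewrite (@big_cat_nat _ _ _ n.+1 0 (M + n.+1)) ?leq_addl //=.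
  rewrite [X in _ + X]big_nat_cond [X in _ + X]big1 ?addr0; last first.
    move=> k /andP [/andP [nk _] _]; by rewrite /g S2_small // mulr0 !mul0r.
  rewrite [in RHS]big_ltn // {2}/g bin0n eqn0Ngt M0 /= !mul0r add0r //.
have e2 : \sum_(0 <= k < M + n.+1) g k = \sum_(q < n.+1) g ((q : nat) + M)%N.
  rewrite (@big_cat_nat _ _ _ M 0 (M + n.+1)) ?leq_addr //=.
  rewrite [X in X + _]big_nat_cond [X in X + _]big1 ?add0r; last first.
    move=> k /andP [/andP [_ kM] _]; by rewrite /g bin_small // !mul0r.
  by rewrite -{1}(add0n M) big_addn addKn big_mkord.
rewrite e1 e2; apply: eq_bigr => q _.
rewrite /g natrM; ring.
Qed.

End Main.

Theorem theorem1 (R : numFieldType) (n : nat) (x : R) :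
  (0 < n)%N -> 1 + x != 0 ->
  hgeom_poly n x =
  \sum_(0 <= l < n.+1) \sum_(1 <= k < n.+1) \sum_(0 <= j < k.+1)
    ((-1) ^+ k.+1 / k%:R) * ('C(n, l))%:R * (stirling2 (n - l) k)%:R
      * (stirling1 k.+1 j.+1)%:R * geom_poly (l + j) x * (x / (1 + x)) ^+ k.
Proof.
move=> n0 hx.
have R1 : \sum_(0 <= l < n.+1) \sum_(1 <= k < n.+1) \sum_(0 <= j < k.+1)
    ((-1) ^+ k.+1 / k%:R) * ('C(n, l))%:R * (stirling2 (n - l) k)%:R
      * (stirling1 k.+1 j.+1)%:R * geom_poly (l + j) x * (x / (1 + x)) ^+ k
  = \sum_(m < n) (-1) ^+ m / (m.+1)%:R *
     \sum_(q < n.+1) (stirling2 n (q + m.+1) * 'C(q + m.+1, m.+1))%:R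
      * ((q + m.+1)`!%:R * x ^+ (q + m.+1)).
  rewrite exchange_big_nat big_add1 -[n.+1.-1]/n big_mkord; apply: eq_bigr => m _.
  transitivity ((-1) ^+ m.+2 / m.+1%:R * (x / (1 + x)) ^+ m.+1 *
    \sum_(l < n.+1) \sum_(j < m.+2) ('C(n, l))%:R * (stirling2 (n - l) m.+1)%:R
     * (stirling1 m.+2 j.+1)%:R * geom_poly (l + j) x).
    rewrite big_mkord mulr_sumr; apply: eq_bigr => l _.
    rewrite big_mkord mulr_sumr; apply: eq_bigr => j _.
    ring.
  rewrite perm_id; last by move: (ltn_ord m).
  rewrite !mulr_sumr; apply: eq_bigr => q _.
  rewrite -addn2 exprD expr2 mulrNN !mulr1 expr_div_n exprD.
  have hx' : (1 + x) ^+ m.+1 != 0 by rewrite expf_neq0.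
  field; by rewrite hx' andbT addrC natr1 pnatr_eq0.
rewrite R1 /hgeom_poly.
transitivity (\sum_(1 <= k < n.+1) \sum_(0 <= m < n)
   (-1) ^+ m / (m.+1)%:R * (('C(k, m.+1))%:R * (stirling2 n k)%:R * (k`!)%:R * x ^+ k)).
  apply: eq_big_nat => k /andP [k1 kn].
  rewrite harm_alt -(big_mkord xpredT (fun m => (-1) ^+ m / (m.+1)%:R * ('C(k, m.+1))%:R)).
  rewrite (@big_cat_nat _ _ _ k 0 n) //= [X in _ = _ + X]big_nat_cond [X in _ = _ + X]big1 ?addr0; last first.
    by move=> i /andP [/andP [ki _] _]; rewrite bin_small ?ltnS // !mul0r mulr0.
  rewrite mulr_sumr mulr_suml; apply: eq_bigr => i _; ring.
rewrite exchange_big_nat /= big_mkord; apply: eq_bigr => m _.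
by rewrite -mulr_sumr reindex.
Qed.
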